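(* Let $G$ be a group (identity $e$), $H$ an abelian group (written additively), and $f:G\to H$ satisfy $f(xy)+f(xy^{-1})=2f(x)$ for all $x,y\in G$, with $f(e)=0$. If $g\in G$ can be written as a product of involutions (elements $i$ with $i^2=e$), then $2f(g)=0$. In particular, if $G$ is generated by involutions, then $2f(g)=0$ for all $g\in G$. *)

(* Defs.v *)
From Stdlib Require List.
From HB Require Import structures.
From mathcomp Require Import all_boot all_algebra.
Set Implicit Arguments. Unset Strict Implicit. Unset Printing Implicit Defensive.
Import GRing.Theory.

Definition is_group (G : Type) (mul : G -> G -> G) (inv : G -> G) (e : G) : Prop :=
  [/\ (forall x y z, mul x (mul y z) = mul (mul x y) z),
      (forall x, mul e x = x), (forall x, mul x e = x),
      (forall x, mul (inv x) x = e) & (forall x, mul x (inv x) = e)].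

Definition gprod (G : Type) (mul : G -> G -> G) (e : G) (s : seq G) : G :=
  foldr mul e s.

Definition involution (G : Type) (mul : G -> G -> G) (e : G) (i : G) : Prop :=
  mul i i = e.

Definition prod_of_involutions (G : Type) (mul : G -> G -> G) (e : G) (g : G) : Prop :=
  exists s : seq G, (forall i, List.In i s -> involution mul e i) /\ g = gprod mul e s.

Definition generated_by (G : Type) (mul : G -> G -> G) (inv : G -> G) (e : G)
  (P : G -> Prop) : Prop :=
  forall g : G, exists w : seq (G * bool),
    (forall p, List.In p w -> P p.1) /\
    g = gprod mul e (map (fun p => if p.2 then p.1 else inv p.1) w).

(* Main.v *)
Require Import Defs.
From HB Require Import structures.
From mathcomp Require Import all_boot all_algebra.
Import GRing.Theory.
Local Open Scope ring_scope.

Theorem mainTheorem3 (G : Type) (mul : G -> G -> G) (inv : G -> G) (e : G)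
  (H : zmodType) (f : G -> H)
  (hG : is_group mul inv e)
  (hf : forall x y : G, f (mul x y) + f (mul x (inv y)) = f x *+ 2)
  (he : f e = 0) :
  (forall g : G, prod_of_involutions mul e g -> f g *+ 2 = 0) /\
  (generated_by mul inv e (involution mul e) -> forall g : G, f g *+ 2 = 0).
Proof.
case: hG => mA m1 mr1 mV mrV.
have finv : forall y, f (inv y) = - f y.
  move=> y; have := hf e y; rewrite !m1 he mul0rn => /eqP.
  by rewrite addr_eq0 => /eqP ->; rewrite opprK.
have invI : forall i, involution mul e i -> inv i = i.
  move=> i hi; rewrite -[inv i]mr1 -hi mA mV m1 //.
have invM : forall a b, inv (mul a b) = mul (inv b) (inv a).
  move=> a b.
  have h1 : mul (mul a b) (mul (inv b) (inv a)) = e.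
    by rewrite -mA (mA b) mrV m1 mrV.
  by rewrite -[inv (mul a b)]mr1 -h1 mA mV m1.
have right : forall x i, involution mul e i -> f (mul x i) *+ 2 = f x *+ 2.
  by move=> x i hi; rewrite -(hf x i) invI // mulr2n.
have left : forall x i, involution mul e i -> f (mul i x) *+ 2 = f x *+ 2.
  move=> x i hi.
  have -> : f (mul i x) = - f (mul (inv x) i).
    by have := finv (mul i x); rewrite invM (invI i hi) => ->; rewrite opprK.
  by rewrite mulNrn right // finv mulNrn opprK.
have part1 : forall g : G, prod_of_involutions mul e g -> f g *+ 2 = 0.
  move=> g [s [hs ->]]; elim: s hs => [|a s IH] hs /=.
    by rewrite he mul0rn.
  rewrite left; last by apply: hs; left.
  by apply: IH => i hi; apply: hs; right.
split => // hgen g.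
have [w [hw ->]] := hgen g.
apply: part1.
eexists; split; last reflexivity.
move=> i /List.in_map_iff [p [<- hp]].
have hi := hw p hp.
by case: (p.2) => //; rewrite /involution invI.
Qed.
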